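(* Let $A,B$ be real $m\times n$ matrices with a simultaneous block structure, and let $b$ be the number of blocks. Let $P,Q$ be $m\times n$ matrices such that $P$ is binary and all entries of $Q$ lie in $[0,1]$. Then $$\|(A-B)\circ Q\|_{\bar F}\le\|(A-B)\circ P\|_{\bar F}+\sqrt{b\|P-Q\|_\Box}\,\|A-B\|_\infty.$$
   Context: A binary matrix has entries in $\{0,1\}$. $\circ$ is the entrywise product; $\|A\|_\infty=\max|a_{ij}|$; $\|A\|_{\bar F}=\big(\frac1{mn}\sum_{i,j}a_{ij}^2\big)^{1/2}$; $\|A\|_\Box=\frac1{mn}\max\{|x^TAy|:x\in\mathbb{R}^m,y\in\mathbb{R}^n,\|x\|_\infty\le1,\|y\|_\infty\le1\}$. A matrix is a block matrix if the rows are partitioned into consecutive intervals and the columns into consecutive intervals such that the matrix is constant on each product of a row interval and a column interval (the blocks); two matrices have a simultaneous block structure if both are block matrices for the same row and column partitions. *)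

(* Defs.v *)
From HB Require Import structures.
From mathcomp Require Import all_boot all_order all_algebra.
From mathcomp Require Import boolp classical_sets reals.
Set Implicit Arguments. Unset Strict Implicit. Unset Printing Implicit Defensive.
Import Order.TTheory GRing.Theory Num.Theory.
Local Open Scope ring_scope.
Local Open Scope classical_set_scope.

Section Defs.
Variable R : realType.

Definition hadamard m n (A B : 'M[R]_(m, n)) : 'M[R]_(m, n) :=
  \matrix_(i, j) (A i j * B i j).

(* ||A||_inf = max |a_ij| (0 for an empty matrix) *)
Definition infnorm m n (A : 'M[R]_(m, n)) : R :=
  \big[Num.max/0]_(i < m) \big[Num.max/0]_(j < n) `|A i j|.

Definition fbarnorm m n (A : 'M[R]_(m, n)) : R :=
  Num.sqrt ((\sum_(i < m) \sum_(j < n) A i j ^+ 2) / (m * n)%:R).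

Definition cutnorm m n (A : 'M[R]_(m, n)) : R :=
  sup [set r : R | exists (x : 'cV[R]_m) (y : 'cV[R]_n),
         (forall i, `|x i 0| <= 1) /\ (forall j, `|y j 0| <= 1) /\
         r = `|(x^T *m A *m y) 0 0|] / (m * n)%:R.

Definition binary_mx m n (P : 'M[R]_(m, n)) : Prop :=
  forall i j, P i j = 0 \/ P i j = 1.

(* A partition of 'I_m into r nonempty consecutive intervals, given by the
   map sending an index to the number of its interval: nondecreasing, onto. *)
Definition interval_partition m r (f : 'I_m -> 'I_r) : Prop :=
  (forall i j : 'I_m, (i <= j)%N -> (f i <= f j)%N) /\
  (forall k : 'I_r, exists i, f i = k).

Definition block_const m n r c (f : 'I_m -> 'I_r) (g : 'I_n -> 'I_c)
  (A : 'M[R]_(m, n)) : Prop :=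
  forall i i' j j', f i = f i' -> g j = g j' -> A i j = A i' j'.

End Defs.

(* Main.v *)
Require Import Defs.
From HB Require Import structures.
From mathcomp Require Import all_boot all_order all_algebra.
From mathcomp Require Import boolp classical_sets reals.
From mathcomp Require Import ring lra.
Import Order.TTheory GRing.Theory Num.Theory.
Local Open Scope ring_scope.

Section Aux.
Variable R : realType.

Lemma infnorm_ge m n (D : 'M[R]_(m, n)) i j : `|D i j| <= infnorm D.
Proof.
rewrite /infnorm.
apply: le_trans (le_bigmax _ (fun i => \big[Num.max/0]_(j < n) `|D i j|) i).
exact: (le_bigmax _ (fun j => `|D i j|) j).
Qed.

Lemma infnorm_ge0 m n (D : 'M[R]_(m, n)) : 0 <= infnorm D.
Proof. exact: bigmax_ge_id. Qed.

Lemma form_bound m n (M : 'M[R]_(m, n)) (x : 'cV[R]_m) (y : 'cV[R]_n) :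
  (forall i, `|x i 0| <= 1) -> (forall j, `|y j 0| <= 1) ->
  `|(x^T *m M *m y) 0 0| <= \sum_(j < n) \sum_(i < m) `|M i j|.
Proof.
move=> hx hy; rewrite !mxE.
apply: le_trans (ler_norm_sum _ _ _) _; apply: ler_sum => j _.
rewrite normrM mxE.
have H1 : `|\sum_(i < m) x^T 0 i * M i j| <= \sum_(i < m) `|M i j|.
  apply: le_trans (ler_norm_sum _ _ _) _; apply: ler_sum => i _.
  rewrite normrM mxE -[X in _ <= X]mul1r; apply: ler_wpM2r => //.
have H0 : 0 <= \sum_(i < m) `|M i j| by apply: sumr_ge0.
rewrite -[X in _ <= X]mulr1; apply: ler_pM => //.
Qed.

End Aux.

(* A, B have a simultaneous block structure with r row intervals and c column
   intervals, so the number of blocks is b = r * c. *)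
Theorem lemma7p3 (R : realType) (m n r c : nat)
  (f : 'I_m -> 'I_r) (g : 'I_n -> 'I_c) (A B P Q : 'M[R]_(m, n)) :
  interval_partition f -> interval_partition g ->
  block_const f g A -> block_const f g B ->
  binary_mx P -> (forall i j, 0 <= Q i j <= 1) ->
  fbarnorm (hadamard (A - B) Q) <=
    fbarnorm (hadamard (A - B) P)
    + Num.sqrt ((r * c)%:R * cutnorm (P - Q)) * infnorm (A - B).
Proof.
move=> [_ hf] [_ hg] hA hB hP hQ.
set D := A - B.
set E := ([set r0 : R | exists (x : 'cV[R]_m) (y : 'cV[R]_n),
         (forall i, `|x i 0| <= 1) /\ (forall j, `|y j 0| <= 1) /\
         r0 = `|(x^T *m (P - Q) *m y) 0 0|])%classic.
have hsup : has_sup E.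
  split.
    exists 0, 0, 0; split; first by move=> i; rewrite mxE normr0.
    split; first by move=> i; rewrite mxE normr0.
    by rewrite mulmx0 mxE normr0.
  exists (\sum_(j < n) \sum_(i < m) `|(P - Q) i j|).
  by move=> _ [x [y [hx [hy ->]]]]; apply: form_bound.
set S := sup E.
have S0 : 0 <= S.
  apply: sup_upper_bound => //.
  exists 0, 0; split; first by move=> i; rewrite mxE normr0.
  split; first by move=> i; rewrite mxE normr0.
  by rewrite mulmx0 mxE normr0.
set Di := infnorm D.
have Di0 : 0 <= Di by apply: infnorm_ge0.
have hD : block_const f g D.
  by move=> i i' j j' e1 e2; rewrite !mxE (hA _ _ _ _ e1 e2) (hB _ _ _ _ e1 e2).
have key : \sum_(i < m) \sum_(j < n) D i j ^+ 2 * (Q i j - P i j)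
           <= (r * c)%:R * S * Di ^+ 2.
  rewrite (eq_bigr (fun i => \sum_(l < c) \sum_(j | g j == l)
                D i j ^+ 2 * (Q i j - P i j))); last first.
    by move=> i _; rewrite (partition_big g xpredT).
  rewrite exchange_big /=.
  rewrite (eq_bigr (fun l => \sum_(k < r) \sum_(i | f i == k) \sum_(j | g j == l)
                D i j ^+ 2 * (Q i j - P i j))); last first.
    by move=> l _; rewrite (partition_big f xpredT).
  have blk : forall (l : 'I_c) (k : 'I_r),
      \sum_(i | f i == k) \sum_(j | g j == l) D i j ^+ 2 * (Q i j - P i j)
      <= S * Di ^+ 2.
    move=> l k.
    have [i0 fi0] := hf k; have [j0 gj0] := hg l.
    have -> : \sum_(i | f i == k) \sum_(j | g j == l) D i j ^+ 2 * (Q i j - P i j)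
      = D i0 j0 ^+ 2 * - \sum_(i | f i == k) \sum_(j | g j == l) (P - Q) i j.
      rewrite -sumrN mulr_sumr; apply: eq_bigr => i /eqP fi.
      rewrite -sumrN mulr_sumr; apply: eq_bigr => j /eqP gj.
      rewrite (hD i i0 j j0); [|by rewrite fi fi0|by rewrite gj gj0].
      by rewrite !mxE opprB.
    set T := \sum_(i | f i == k) _.
    have hT : `|T| <= S.
      apply: sup_upper_bound => //.
      exists (\col_i (f i == k)%:R), (\col_j (g j == l)%:R).
      split; first by move=> i; rewrite mxE; case: (f i == k); rewrite ?normr1 ?normr0.
      split; first by move=> j; rewrite mxE; case: (g j == l); rewrite ?normr1 ?normr0.
      congr `|_|; rewrite /T !mxE.
      rewrite exchange_big /= big_mkcond /=; apply: eq_bigr => j _.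
      rewrite !mxE mulr_suml; case: (g j == l) => /=.
        rewrite big_mkcond /=; apply: eq_bigr => i _.
        by rewrite !mxE; case: (f i == k); rewrite /= ?mul1r ?mulr1 ?mul0r ?mulr0.
      by rewrite big1 // => i _; rewrite mulr0.
    apply: (@le_trans _ _ (D i0 j0 ^+ 2 * `|T|)).
      by apply: ler_wpM2l; [exact: sqr_ge0| rewrite -normrN; exact: ler_norm].
    rewrite mulrC; apply: ler_pM => //; first exact: sqr_ge0.
    rewrite -[D i0 j0 ^+ 2]ger0_norm ?sqr_ge0 // normrX ler_sqr ?nnegrE ?normr_ge0 //; exact: infnorm_ge.
  apply: le_trans (ler_sum _ (fun l _ => ler_sum _ (fun k _ => blk l k))) _.
  rewrite !sumr_const !card_ord; rewrite le_eqVlt; apply/orP; left; apply/eqP; rewrite -mulrnA -mulr_natl; ring.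
set N := (m * n)%:R : R.
set K := (r * c)%:R : R.
have K0 : 0 <= K by apply: ler0n.
have N0 : 0 <= N^-1 by rewrite invr_ge0 ler0n.
have hQ1 : \sum_(i < m) \sum_(j < n) hadamard D Q i j ^+ 2
    <= \sum_(i < m) \sum_(j < n) D i j ^+ 2 * Q i j.
  apply: ler_sum => i _; apply: ler_sum => j _.
  rewrite mxE exprMn; apply: ler_wpM2l; first exact: sqr_ge0.
  have /andP[q0 q1] := hQ i j.
  by rewrite expr2 -[X in _ <= X]mulr1; apply: ler_wpM2l.
have hP1 : \sum_(i < m) \sum_(j < n) hadamard D P i j ^+ 2
    = \sum_(i < m) \sum_(j < n) D i j ^+ 2 * P i j.
  apply: eq_bigr => i _; apply: eq_bigr => j _.
  by rewrite mxE exprMn; case: (hP i j) => ->; rewrite ?expr0n ?expr1n.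
have hsplit : \sum_(i < m) \sum_(j < n) D i j ^+ 2 * Q i j
    = \sum_(i < m) \sum_(j < n) D i j ^+ 2 * P i j
      + \sum_(i < m) \sum_(j < n) D i j ^+ 2 * (Q i j - P i j).
  rewrite -big_split /=; apply: eq_bigr => i _.
  rewrite -big_split /=; apply: eq_bigr => j _; ring.
set SQ := \sum_(i < m) \sum_(j < n) hadamard D Q i j ^+ 2.
set SP := \sum_(i < m) \sum_(j < n) hadamard D P i j ^+ 2.
have h1 : SQ <= SP + K * S * Di ^+ 2.
  apply: le_trans hQ1 _; rewrite hsplit -hP1 lerD2l; exact: key.
have eX : cutnorm (P - Q) = S / N by [].
set X := K * cutnorm (P - Q).
have X0 : 0 <= X by rewrite /X eX; apply: mulr_ge0 => //; apply: mulr_ge0.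
have SP0 : 0 <= SP / N.
  apply: mulr_ge0 => //; apply: sumr_ge0 => i _; apply: sumr_ge0 => j _; exact: sqr_ge0.
have h2 : SQ / N <= SP / N + X * Di ^+ 2.
  have -> : SP / N + X * Di ^+ 2 = (SP + K * S * Di ^+ 2) / N.
    by rewrite /X eX; ring.
  exact: ler_wpM2r.
rewrite /fbarnorm -/SQ -/SP -/N.
have Y0 : 0 <= X * Di ^+ 2 by apply: mulr_ge0 => //; exact: sqr_ge0.
apply: (@le_trans _ _ (Num.sqrt (SP / N + X * Di ^+ 2))).
  by rewrite ler_sqrt //; apply: addr_ge0.
have -> : Num.sqrt X * Di = Num.sqrt (X * Di ^+ 2).
  by rewrite [RHS]sqrtrM // sqrtr_sqr ger0_norm.
set a := SP / N; set b := X * Di ^+ 2.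
rewrite -[X in _ <= X]ger0_norm; last by apply: addr_ge0; apply: sqrtr_ge0.
rewrite -sqrtr_sqr ler_sqrt; last exact: sqr_ge0.
rewrite sqrrD !sqr_sqrtr // -addrA lerD2l -[X in X <= _]add0r lerD2r.
by apply: mulrn_wge0; apply: mulr_ge0; apply: sqrtr_ge0.
Qed.
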